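(* Let $G$ be an infinite compact group and $\alpha$ an automorphism of $G$ such that $(G,\alpha)$ has finite depth. Let $V$ be an open subgroup of $G$ with $\bigcap_{k\in\mathbb{Z}}\alpha^k(V)=\{1\}$ and $V=V_+V_-$. Then the index $[\alpha(V_+):V_+]$ is strictly greater than $1$ and does not depend on the choice of the open subgroup $V$ with these two properties.
   Context: $V_+=\bigcap_{k\ge0}\alpha^k(V)$ and $V_-=\bigcap_{k\ge0}\alpha^{-k}(V)$. $(G,\alpha)$ has finite depth if there is an open subgroup $V\le G$ with $\bigcap_{k\in\mathbb{Z}}\alpha^k(V)=\{1\}$. *)

(* Defs.v *)
From HB Require Import structures.
From mathcomp Require Import all_boot all_order all_algebra.
From mathcomp Require Import all_classical all_reals all_analysis.
Set Implicit Arguments. Unset Strict Implicit. Unset Printing Implicit Defensive.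
Import Order.TTheory GRing.Theory Num.Theory.
Local Open Scope classical_set_scope.

Section TopGroups.
Context {T : topologicalType}.

Definition topological_group (mul : T -> T -> T) (inv : T -> T) (one : T) : Prop :=
  [/\ (forall x y z, mul x (mul y z) = mul (mul x y) z),
      (forall x, mul one x = x),
      (forall x, mul (inv x) x = one),
      continuous (fun p : T * T => mul p.1 p.2) &
      continuous inv].

(* alpha is an automorphism of the topological group: a bijective continuous
   group homomorphism which is an open map (i.e. its inverse is continuous). *)
Definition topgroup_automorphism (mul : T -> T -> T) (alpha : T -> T) : Prop :=
  [/\ (forall x y, alpha (mul x y) = mul (alpha x) (alpha y)),
      bijective alpha,
      continuous alpha &
      (forall U : set T, open U -> open (alpha @` U))].

Definition is_subgroup (mul : T -> T -> T) (inv : T -> T) (one : T) (H : set T) : Prop :=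
  [/\ H one,
      (forall x y, H x -> H y -> H (mul x y)) &
      (forall x, H x -> H (inv x))].

(* alpha^k(V) for k : int; for negative k = -n, alpha^k(V) = alpha^{-n}(V) is
   the preimage of V under alpha^n (alpha being bijective). *)
Definition apow_img (alpha : T -> T) (k : int) (V : set T) : set T :=
  match k with
  | Posz n => iter n alpha @` V
  | Negz n => iter n.+1 alpha @^-1` V
  end.

Definition Vplus (alpha : T -> T) (V : set T) : set T :=
  \bigcap_(k in [set: nat]) apow_img alpha (Posz k) V.

Definition Vminus (alpha : T -> T) (V : set T) : set T :=
  \bigcap_(k in [set: nat]) apow_img alpha (- (Posz k))%R V.

Definition tidy_core (alpha : T -> T) (V : set T) : set T :=
  \bigcap_(k in [set: int]) apow_img alpha k V.

Definition setmul (mul : T -> T -> T) (A B : set T) : set T :=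
  [set mul x y | x in A & y in B].

(* the set of left cosets x K of K with x in H; its cardinality is [H : K] *)
Definition left_cosets (mul : T -> T -> T) (H K : set T) : set (set T) :=
  [set [set mul x y | y in K] | x in H].

Definition finite_depth (mul : T -> T -> T) (inv : T -> T) (one : T)
    (alpha : T -> T) : Prop :=
  exists V : set T, [/\ is_subgroup mul inv one V, open V &
                        tidy_core alpha V = [set one]].

End TopGroups.

(* Main.v *)
Require Import Defs.
From HB Require Import structures.
From mathcomp Require Import all_boot all_order all_algebra.
From mathcomp Require Import all_classical all_reals all_analysis.
Local Open Scope classical_set_scope.
Local Open Scope card_scope.
Set Implicit Arguments. Unset Strict Implicit. Unset Printing Implicit Defensive.

Lemma card_prodI (A B : Type) (S : set A) (R : set B) n m :
  S #= `I_n -> R #= `I_m -> S `*` R #= `I_(n * m).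
Proof.
move=> /card_set_bijP[f [ff fi fs]] /card_set_bijP[g [gf gi gs]].
apply/card_set_bijP; exists (fun p => f p.1 * m + g p.2)%N; split.
- move=> [s r] [/= Ss Rr]; have := ff _ Ss; have := gf _ Rr; rewrite /= => hg hf.
  apply: (@leq_trans ((f s).+1 * m)); first by rewrite mulSnr ltn_add2l.
  by rewrite leq_mul2r hf orbT.
- move=> [s r] [s' r'] /set_mem[/= Ss Rr] /set_mem[/= Ss' Rr'] e.
  have hg := gf _ Rr; have hg' := gf _ Rr'; move: hg hg'; rewrite /= => hg hg'.
  have mpos : (0 < m)%N by case: (m) hg.
  have e1 : f s = f s'.
    have := congr1 (fun k => k %/ m)%N e.
    rewrite /= (divnMDl _ _ mpos) (divnMDl _ _ mpos).
    by rewrite (divn_small hg) (divn_small hg') !addn0.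
  have e2 : g r = g r'.
    have := congr1 (fun k => k %% m)%N e.
    by rewrite /= !modnMDl (modn_small hg) (modn_small hg').
  by rewrite (fi s s' (mem_set Ss) (mem_set Ss') e1) (gi r r' (mem_set Rr) (mem_set Rr') e2).
- move=> k; rewrite /= => hk.
  have mpos : (0 < m)%N by case: (m) hk => //; rewrite muln0.
  have hkm : `I_n (k %/ m)%N by rewrite /= ltn_divLR.
  have hkm' : `I_m (k %% m)%N by rewrite /= ltn_mod.
  have [s Ss es] := fs _ hkm.
  have [r Rr er] := gs _ hkm'.
  exists (s, r) => //=.
  by rewrite es er -divn_eq.
Qed.

Lemma card_swap (A B : pointedType) (S : set A) (R : set B) :
  S `*` R #= R `*` S.
Proof.
apply/card_set_bijP; exists (fun p => (p.2, p.1)); split.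
- by move=> [a b] [].
- by move=> [a b] [c d] _ _ [-> ->].
- by move=> [b a] [/= Hb Ha]; exists (a, b).
Qed.

Lemma card1_eq (A : Type) (S : set A) a b : S #= `I_1 -> S a -> S b -> a = b.
Proof.
move=> /card_set_bijP[f [ff fi _]] Sa Sb; apply: fi; rewrite ?inE //.
by have := ff _ Sa; have := ff _ Sb; rewrite /=; case: (f a) => //; case: (f b).
Qed.

Lemma le_unit_eq (A : Type) (S : set A) a b : S #<= [set: unit] -> S a -> S b -> a = b.
Proof.
move=> /pcard_injP[f fi] Sa Sb.
apply: fi; [exact: mem_set | exact: mem_set | by case: (f a); case: (f b)].
Qed.
Lemma card_pos (A : Type) (S : set A) a n : S #= `I_n -> S a -> (0 < n)%N.
Proof. by move=> /card_set_bijP[f [ff _ _]] Sa; have := ff _ Sa; rewrite /=; case: n {ff}. Qed.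

Definition pt (T : topologicalType) (x : T) : Type := T.
Arguments pt : clear implicits.
HB.instance Definition _ (T : topologicalType) (x : T) := Topological.copy (pt T x) T.
HB.instance Definition _ (T : topologicalType) (x : T) := isPointed.Build (pt T x) x.
Lemma compact_cover_np (T : topologicalType) (x : T) (A : set T) :
  compact A -> cover_compact A.
Proof.
move=> cA; have := @compact_cover (pt T x).
move=> e; have : @compact (pt T x) A by exact: cA.
by rewrite e.
Qed.

Section Grp.
Variable T : topologicalType.
Variables (mul : T -> T -> T) (inv : T -> T) (one : T).
Hypothesis mulA : forall x y z, mul x (mul y z) = mul (mul x y) z.
Hypothesis mul1x : forall x, mul one x = x.
Hypothesis mulVx : forall x, mul (inv x) x = one.

Lemma mulKg a x : mul (inv a) (mul a x) = x.
Proof. by rewrite mulA mulVx mul1x. Qed.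

Lemma mulI a x y : mul a x = mul a y -> x = y.
Proof. by move=> h; rewrite -(mulKg a x) h mulKg. Qed.

Lemma mulxV x : mul x (inv x) = one.
Proof.
set e := mul x (inv x).
have ee : mul e e = e by rewrite /e -mulA (mulA (inv x)) mulVx mul1x.
by rewrite -[e in LHS](mulKg e e) ee mulVx.
Qed.

Lemma mulx1 x : mul x one = x.
Proof. by rewrite -(mulVx x) mulA mulxV mul1x. Qed.

Lemma mulVK a x : mul a (mul (inv a) x) = x.
Proof. by rewrite mulA mulxV mul1x. Qed.

Lemma invM x y : inv (mul x y) = mul (inv y) (inv x).
Proof.
apply: (@mulI (mul x y)); rewrite mulxV -mulA (mulA y) mulxV mul1x mulxV //.
Qed.

Lemma inv1 : inv one = one.
Proof. by rewrite -[inv one]mulx1 mulVx. Qed.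

Definition cos x (K : set T) := [set mul x y | y in K].

Section Sub.
Variable K : set T.
Hypothesis HK : is_subgroup mul inv one K.

Lemma sub1 : K one. Proof. by case: HK. Qed.
Lemma subM x y : K x -> K y -> K (mul x y). Proof. by case: HK => _ h _; apply: h. Qed.
Lemma subV x : K x -> K (inv x). Proof. by case: HK => _ _ h; apply: h. Qed.

Lemma cos_self x : cos x K x.
Proof. by exists one; [exact: sub1 | rewrite mulx1]. Qed.

Lemma cosE x y : cos x K y <-> K (mul (inv x) y).
Proof.
split=> [[k Kk <-]|h]; first by rewrite mulKg.
by exists (mul (inv x) y) => //; rewrite mulVK.
Qed.

Lemma cos_eqP x y : cos x K = cos y K <-> K (mul (inv x) y).
Proof.
split=> [e|h]; first by apply/cosE; rewrite e; exact: cos_self.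
apply/seteqP; split=> z /cosE hz; apply/cosE.
  have -> : mul (inv y) z = mul (inv (mul (inv x) y)) (mul (inv x) z).
    by rewrite invM -mulA mulKg.
  by apply: subM => //; apply: subV.
have -> : mul (inv x) z = mul (mul (inv x) y) (mul (inv y) z).
  by rewrite -mulA mulVK.
by apply: subM.
Qed.
End Sub.

Definition rep (H K : set T) (C : set T) :=
  xget one (fun x => H x /\ cos x K = C).

Lemma rep_spec H K C : left_cosets mul H K C -> H (rep H K C) /\ cos (rep H K C) K = C.
Proof. by move=> [x Hx <-]; apply: (@xgetPex _ one (fun y => H y /\ cos y K = cos x K)); exists x. Qed.

Lemma tower (L H K : set T) :
  is_subgroup mul inv one L -> is_subgroup mul inv one H -> is_subgroup mul inv one K ->
  K `<=` H -> H `<=` L ->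
  left_cosets mul L K #= left_cosets mul L H `*` left_cosets mul H K.
Proof.
move=> sL sH sK KH HL; apply: card_esym; apply/card_set_bijP.
exists (fun p => cos (mul (rep L H p.1) (rep H K p.2)) K); split.
- move=> [C D] [/= /rep_spec[Lc _] /rep_spec[Hd _]].
  by exists (mul (rep L H C) (rep H K D)) => //; apply: (subM sL) => //; apply: HL.
- move=> [C D] [C' D'] /set_mem[/= /rep_spec[Lc ec] /rep_spec[Hd ed]].
  move=> /set_mem[/= /rep_spec[Lc' ec'] /rep_spec[Hd' ed']] /=.
  set c := rep L H C in Lc ec *; set d := rep H K D in Hd ed *.
  set c' := rep L H C' in Lc' ec' *; set d' := rep H K D' in Hd' ed' *.
  move/(cos_eqP sK) => k.
  have hc : H (mul (inv c) c').
    have -> : mul (inv c) c' = mul (mul d (mul (inv (mul c d)) (mul c' d'))) (inv d').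
      by rewrite invM -!mulA mulVK mulxV mulx1.
    by apply: (subM sH); [apply: (subM sH) => //; apply: KH | apply: (subV sH)].
  have eC : C = C' by rewrite -ec -ec'; apply/(cos_eqP sH).
  have ecc : c = c' by rewrite /c /c' eC.
  rewrite -ecc invM -mulA mulKg in k.
  by rewrite eC -ed -ed'; congr (_, _); apply/(cos_eqP sK).
- move=> C [x Lx <-].
  have CL : left_cosets mul L H (cos x H) by exists x.
  have [Lc ec] := rep_spec CL; set c := rep L H (cos x H) in Lc ec *.
  have hh : H (mul (inv c) x) by apply/(cos_eqP sH).
  have DL : left_cosets mul H K (cos (mul (inv c) x) K) by exists (mul (inv c) x).
  have [Hd ed] := rep_spec DL; set d := rep H K _ in Hd ed *.
  have kk : K (mul (inv d) (mul (inv c) x)) by apply/(cos_eqP sK).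
  exists (cos x H, cos (mul (inv c) x) K) => //=.
  apply/(cos_eqP sK); by rewrite invM -mulA.
Qed.

Lemma transport (a : T -> T) (H K : set T) :
  (forall x y, a (mul x y) = mul (a x) (a y)) -> injective a ->
  left_cosets mul H K #= left_cosets mul (a @` H) (a @` K).
Proof.
move=> ahom ainj.
have acos x : a @` cos x K = cos (a x) (a @` K).
  apply/seteqP; split.
    by move=> _ [_ [k Kk <-] <-]; rewrite ahom; exists (a k) => //; exists k.
  by move=> _ [_ [k Kk <-] <-]; exists (mul x k); [exists k | rewrite ahom].
apply/card_set_bijP; exists (fun C => a @` C); split.
- by move=> _ [x Hx <-]; rewrite acos; exists (a x) => //; exists x.
- move=> C C' _ _ e; apply/seteqP; split=> z Cz.
    have [w C'w /ainj ew] : (a @` C') (a z) by rewrite -e; exists z.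
    by rewrite -ew.
  have [w Cw /ainj ew] : (a @` C) (a z) by rewrite e; exists z.
  by rewrite -ew.
- move=> _ [_ [x Hx <-] <-]; exists (cos x K); first by exists x.
  by rewrite acos.
Qed.

Lemma coset_inj_le (B A U : set T) :
  is_subgroup mul inv one A -> is_subgroup mul inv one U ->
  (forall x, B x -> U x -> A x) -> (forall x y, B x -> B y -> B (mul (inv x) y)) ->
  left_cosets mul B A #<= left_cosets mul setT U.
Proof.
move=> sA sU BUA Bcl; apply/pcard_leP; apply/injfunPex.
exists (fun C => cos (rep B A C) U).
- by move=> C _; exists (rep B A C).
- move=> C C' /set_mem /rep_spec[Bc ec] /set_mem /rep_spec[Bc' ec'] /(cos_eqP sU) h.
  by rewrite -ec -ec'; apply/(cos_eqP sA); apply: BUA => //; apply: Bcl.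
Qed.

Lemma cos_open (U : set T) : is_subgroup mul inv one U ->
  (forall c, continuous (mul c)) -> open U -> forall x, open (cos x U).
Proof.
move=> sU hc oU x.
have -> : cos x U = mul (inv x) @^-1` U.
  by apply/seteqP; split=> z; [move/(@cosE U _ _) | move=> h; apply/(@cosE U _ _)].
by move/continuousP: (hc (inv x)); apply.
Qed.

Lemma cosets_finite (U : set T) : is_subgroup mul inv one U ->
  (forall c, continuous (mul c)) -> open U -> compact [set: T] ->
  finite_set (left_cosets mul setT U).
Proof.
move=> sU hc oU cT.
move: cT => /(compact_cover_np one) /(_ T setT (fun x => cos x U)) [].
- by move=> x _; apply: cos_open.
- by move=> x _; exists x => //; apply: cos_self.
move=> D _ cov.
have fin := finite_image (fun x : T => cos x U) (finite_fset D).
apply: (sub_finite_set _ fin).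
move=> _ [x _ <-]; have [d Dd xd] := cov x I.
by exists d => //; apply/(cos_eqP sU); move/(@cosE U _ _): xd.
Qed.

Lemma hom1 f : (forall x y, f (mul x y) = mul (f x) (f y)) -> f one = one.
Proof.
move=> fh; apply: (@mulI (f one)); rewrite -fh mul1x mulx1 //.
Qed.

Lemma homV f : (forall x y, f (mul x y) = mul (f x) (f y)) -> forall x, f (inv x) = inv (f x).
Proof.
move=> fh x; have e : mul (f (inv x)) (f x) = mul (inv (f x)) (f x).
  by rewrite -fh mulVx mulVx hom1.
have := congr1 (fun z => mul z (inv (f x))) e; by rewrite /= -!mulA mulxV !mulx1.
Qed.

Lemma sub_preim f K : (forall x y, f (mul x y) = mul (f x) (f y)) ->
  is_subgroup mul inv one K -> is_subgroup mul inv one (f @^-1` K).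
Proof.
move=> fh sK; split => /=.
- by rewrite hom1 //; apply: sub1.
- by move=> x y Kx Ky; rewrite fh; apply: subM.
- by move=> x Kx; rewrite homV //; apply: subV.
Qed.

Lemma sub_bigcap (I : Type) (D : set I) (F : I -> set T) :
  (forall i, is_subgroup mul inv one (F i)) -> is_subgroup mul inv one (\bigcap_(i in D) F i).
Proof.
move=> h; split.
- by move=> i _; apply: sub1.
- by move=> x y hx hy i Di; apply: subM; [apply: h | apply: hx | apply: hy].
- by move=> x hx i Di; apply: subV; [apply: h | apply: hx].
Qed.

Lemma sub_closed (U : set T) : is_subgroup mul inv one U ->
  (forall c, continuous (mul c)) -> open U -> closed U.
Proof.
move=> sU hc oU; rewrite -[U]setCK closedC.
have -> : ~` U = \bigcup_(x in ~` U) cos x U.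
  apply/seteqP; split=> [x nUx|x [y nUy [u Uu <-]] Uyu]; first by exists x => //; apply: cos_self.
  apply: nUy; have -> : y = mul (mul y u) (inv u) by rewrite -mulA mulxV mulx1.
  by apply: subM => //; apply: subV.
by apply: bigcup_open => x _; apply: cos_open.
Qed.

Section Alpha.
Variables alpha beta : T -> T.
Hypothesis ahom : forall x y, alpha (mul x y) = mul (alpha x) (alpha y).
Hypothesis abK : cancel alpha beta.
Hypothesis baK : cancel beta alpha.
Hypothesis acont : continuous alpha.
Hypothesis aopen : forall U : set T, open U -> open (alpha @` U).

Lemma bhom x y : beta (mul x y) = mul (beta x) (beta y).
Proof. by rewrite -{1}(baK x) -{1}(baK y) -ahom abK. Qed.

Lemma iter_hom f k : (forall x y, f (mul x y) = mul (f x) (f y)) ->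
  forall x y, iter k f (mul x y) = mul (iter k f x) (iter k f y).
Proof. by move=> fh; elim: k => //= k IH x y; rewrite IH fh. Qed.

Lemma iter_ab k x : iter k alpha (iter k beta x) = x.
Proof. by elim: k x => //= k IH x; rewrite -iterS iterSr baK IH. Qed.

Lemma iter_ba k x : iter k beta (iter k alpha x) = x.
Proof. by elim: k x => //= k IH x; rewrite -iterS iterSr abK IH. Qed.

Lemma img_iter k (V : set T) x : (iter k alpha @` V) x <-> V (iter k beta x).
Proof.
split=> [[y Vy <-]|Vx]; first by rewrite iter_ba.
by exists (iter k beta x) => //; rewrite iter_ab.
Qed.

Lemma img_a (V : set T) x : (alpha @` V) x <-> V (beta x).
Proof. exact: (img_iter 1). Qed.

Lemma VplusE (V : set T) x : Vplus alpha V x <-> forall k, V (iter k beta x).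
Proof.
split=> [h k|h k _]; first by apply/(img_iter k); apply: h.
by apply/(img_iter k).
Qed.

Lemma VplusE' (V : set T) : Vplus alpha V = \bigcap_(k in [set: nat]) (iter k beta @^-1` V).
Proof.
apply/seteqP; split=> x; first by move/VplusE => h k _; apply: h.
by move=> h; apply/VplusE => k; apply: h.
Qed.

Lemma VminusE (V : set T) x : Vminus alpha V x <-> forall k, V (iter k alpha x).
Proof.
split=> [h k|h k _].
  by have := h k I; case: k => [|k] /=; [case=> y Vy <- | ].
by case: k => [|k] /=; [exists x => //; apply: (h 0%N) | apply: (h k.+1)].
Qed.

Lemma coreE (V : set T) : tidy_core alpha V = [set one] -> forall x,
  (forall k, V (iter k beta x)) -> (forall k, V (iter k.+1 alpha x)) -> x = one.
Proof.
move=> e x h1 h2; have : tidy_core alpha V x.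
  by move=> [k|k] _ /=; [apply/img_iter | apply: h2].
by rewrite e.
Qed.

Lemma bcont : continuous beta.
Proof.
apply/continuousP => A oA.
have -> : beta @^-1` A = alpha @` A by apply/seteqP; split=> x /img_a.
exact: aopen.
Qed.

Lemma iter_cont (f : T -> T) k : continuous f -> continuous (iter k f).
Proof.
move=> fc; elim: k => [|k IH] x /=; first exact: cvg_id.
exact: (continuous_comp (IH x) (fc _)).
Qed.

Lemma Pplus_b (V : set T) m x : Vplus alpha V x -> Vplus alpha V (iter m beta x).
Proof. by move=> /VplusE h; apply/VplusE => j; rewrite -iterD; apply: h. Qed.

Lemma Pplus_sub (V : set T) : is_subgroup mul inv one V -> is_subgroup mul inv one (Vplus alpha V).
Proof.
move=> sV; rewrite VplusE'; apply: sub_bigcap => k.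
by apply: sub_preim => //; apply: iter_hom; apply: bhom.
Qed.

Hypothesis hc : forall c, continuous (mul c).
Hypothesis cT : compact [set: T].

Lemma Pplus_closed (V : set T) : is_subgroup mul inv one V -> open V -> closed (Vplus alpha V).
Proof.
move=> sV oV; rewrite VplusE'; apply: closed_bigI => k _.
apply: preimage_closed; last exact: sub_closed.
by move=> x _; apply: iter_cont; apply: bcont.
Qed.

Lemma eventual (V W : set T) : is_subgroup mul inv one V -> open V ->
  tidy_core alpha V = [set one] -> open W -> W one ->
  exists N, forall x, Vplus alpha V x -> forall k, (N <= k)%N -> W (iter k beta x).
Proof.
move=> sV oV core oW W1.
pose D n := iter n alpha @^-1` Vplus alpha V.
have Dcl n : closed (D n).
  apply: preimage_closed; last exact: Pplus_closed.
  by move=> x _; apply: iter_cont.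
move: cT => /(compact_cover_np one).
move=> /(_ nat setT (fun i => if i is n.+1 then ~` D n else W)) [].
- by case=> [|n] _ //; apply: closed_openC.
- move=> x _; case: (pselect (W x)) => [Wx|nWx]; first by exists 0%N.
  case: (pselect (forall n, D n x)) => [hall|/existsNP [n hn]]; last by exists n.+1.
  exfalso; apply: nWx; rewrite (coreE core (x := x)) //.
    by move=> k; have /VplusE := hall 0%N; apply.
  by move=> k; have /VplusE := hall k.+1; move/(_ 0%N).
move=> D' _ cov.
exists (\max_(i <- finmap.enum_fset D') i) => x Px k Nk.
have [i Di fi] := cov (iter k beta x) I.
case: i Di fi => [//|n] Di fi; exfalso; apply: fi.
have hN := @leq_bigmax_seq _ (finmap.enum_fset D') xpredT (fun i => i) n.+1 Di isT.
have nk : (n <= k)%N by exact: (leq_trans (leqnSn n) (leq_trans hN Nk)).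
rewrite /D /= -(subnKC nk) iterD iter_ab.
exact: Pplus_b.
Qed.

Lemma img_aE (S : set T) : alpha @` S = beta @^-1` S.
Proof. by apply/seteqP; split=> x /img_a. Qed.

Lemma sub_setI (A B : set T) : is_subgroup mul inv one A -> is_subgroup mul inv one B ->
  is_subgroup mul inv one (A `&` B).
Proof.
move=> sA sB; split; first by split; apply: sub1.
- by move=> x y [Ax Bx] [Ay By]; split; apply: subM.
- by move=> x [Ax Bx]; split; apply: subV.
Qed.

Lemma aP_sub (V : set T) : is_subgroup mul inv one V ->
  is_subgroup mul inv one (alpha @` Vplus alpha V).
Proof. by move=> sV; rewrite img_aE; apply: sub_preim; [apply: bhom | apply: Pplus_sub]. Qed.

Lemma P_aP (V : set T) : Vplus alpha V `<=` alpha @` Vplus alpha V.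
Proof. by move=> x Px; apply/img_a; apply: (Pplus_b 1). Qed.

Lemma aP_cap (V : set T) x : (alpha @` Vplus alpha V) x -> V x -> Vplus alpha V x.
Proof.
move=> /img_a /VplusE h Vx; apply/VplusE => -[|k] //.
by rewrite iterSr; apply: h.
Qed.

Lemma index_fin (V : set T) : is_subgroup mul inv one V -> open V ->
  finite_set (left_cosets mul (alpha @` Vplus alpha V) (Vplus alpha V)).
Proof.
move=> sV oV.
apply: (card_le_finite _ (cosets_finite sV hc oV cT)).
apply: coset_inj_le.
- exact: Pplus_sub.
- exact: sV.
- by move=> x h1 h2; apply: aP_cap.
- by move=> x y hx hy; have sa := aP_sub sV; apply: (subM sa) => //; apply: (subV sa).
Qed.

Fixpoint Ofix (W : set T) (N : nat) : set T :=
  if N is n.+1 then Ofix W n `&` (iter n beta @^-1` W) else setT.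

Lemma OfixE W N x : Ofix W N x <-> forall k, (k < N)%N -> W (iter k beta x).
Proof.
elim: N => [|N IH] /=; first by split=> // _ k.
split=> [[/IH h1 h2] k|h]; last first.
  by split; [apply/IH => k kN; apply: h; apply: ltnW | apply: h].
rewrite ltnS leq_eqVlt => /orP[/eqP -> //|]; exact: h1.
Qed.

Lemma Ofix_sub W N : is_subgroup mul inv one W -> is_subgroup mul inv one (Ofix W N).
Proof.
move=> sW; elim: N => [|N IH] /=; first by split.
apply: sub_setI => //; apply: sub_preim => //; apply: iter_hom; apply: bhom.
Qed.

Lemma Ofix_open W N : open W -> open (Ofix W N).
Proof.
move=> oW; elim: N => [|N IH] /=; first exact: openT.
apply: openI => //; apply: open_comp => //.
by move=> x _; apply: iter_cont; apply: bcont.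
Qed.

Lemma index_inter (V W : set T) :
  is_subgroup mul inv one V -> open V -> tidy_core alpha V = [set one] ->
  is_subgroup mul inv one W -> open W ->
  left_cosets mul (alpha @` Vplus alpha V) (Vplus alpha V) #=
  left_cosets mul (alpha @` Vplus alpha (V `&` W)) (Vplus alpha (V `&` W)).
Proof.
move=> sV oV core sW oW.
set U := V `&` W.
have sU : is_subgroup mul inv one U by apply: sub_setI.
have oU : open U by apply: openI.
set A := Vplus alpha U; set B := Vplus alpha V.
have sA : is_subgroup mul inv one A by apply: Pplus_sub.
have sB : is_subgroup mul inv one B by apply: Pplus_sub.
have AB : A `<=` B by move=> x /VplusE h; apply/VplusE => k; case: (h k).
have [N hN] := eventual sV oV core oW (sub1 sW).
have BOA x : B x -> Ofix W N x -> A x.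
  move=> Bx /OfixE Ox; apply/VplusE => k; split; first by move/VplusE: Bx; apply.
  by case: (ltnP k N) => kN; [apply: Ox | apply: hN].
have [p Hp] := index_fin sV oV.
have [q Hq] := index_fin sU oU.
have [x Hx] : finite_set (left_cosets mul B A).
  apply: (card_le_finite _ (cosets_finite (Ofix_sub N sW) hc (Ofix_open N oW) cT)).
  apply: coset_inj_le => //; first exact: Ofix_sub.
  by move=> y z hy hz; apply: (subM sB) => //; apply: (subV sB).
have ainj : injective alpha := can_inj abK.
have T1 := tower (aP_sub sV) sB sA AB (@P_aP V).
have T2 := tower (aP_sub sV) (aP_sub sU) sA (@P_aP U) (image_subset alpha AB).
have T3 := transport B A ahom ainj.
have E1 := card_eq_trans T1 (card_prodI Hp Hx).
have E2 := card_eq_trans T2 (card_prodI (card_eq_trans (card_esym T3) Hx) Hq).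
have /card_eq_II e := card_eq_trans (card_esym E1) E2.
have C1 : left_cosets mul B A (cos one A) by exists one => //; apply: sub1.
have xpos : (0 < x)%N := card_pos Hx C1.
rewrite [(x * q)%N]mulnC in e.
have epq : p = q by apply/eqP; rewrite -(eqn_pmul2r xpos) e.
apply: card_eq_trans Hp _; rewrite epq; exact: card_esym Hq.
Qed.

Lemma part1 (V : set T) :
  is_subgroup mul inv one V -> open V -> tidy_core alpha V = [set one] ->
  V = setmul mul (Vplus alpha V) (Vminus alpha V) -> infinite_set [set: T] ->
  ~ (left_cosets mul (alpha @` Vplus alpha V) (Vplus alpha V) #<= [set: unit]).
Proof.
move=> sV oV core hsplit infT hle.
set P := Vplus alpha V.
have sP : is_subgroup mul inv one P by apply: Pplus_sub.
have saP := aP_sub sV.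
have aPP : alpha @` P `<=` P.
  move=> x aPx.
  have e := le_unit_eq hle (_ : left_cosets mul (alpha @` P) P (cos one P))
                            (_ : left_cosets mul (alpha @` P) P (cos x P)).
  have /(cos_eqP sP) := e (ex_intro2 _ _ one (sub1 saP) erefl) (ex_intro2 _ _ x aPx erefl).
  by rewrite inv1 mul1x.
have P1 x : P x -> x = one.
  move=> Px; have Pn n : P (iter n alpha x).
    by elim: n => //= n IH; apply: aPP; exists (iter n alpha x).
  apply: (coreE core); first by move/VplusE: Px.
  by move=> k; have /VplusE /(_ 0%N) := Pn k.+1.
have VaV x : V x -> V (alpha x).
  move=> Vx; have : setmul mul P (Vminus alpha V) x by rewrite /P -hsplit.
  case=> p Pp [m Mm <-]; rewrite (P1 _ Pp) mul1x.
  by move/VminusE: Mm => /(_ 1%N).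
have sAV : is_subgroup mul inv one (alpha @` V).
  by rewrite img_aE; apply: sub_preim => //; apply: bhom.
have oAV : open (alpha @` V) by apply: aopen.
have AVV : alpha @` V `<=` V by move=> _ [y Vy <-]; apply: VaV.
have sT : is_subgroup mul inv one [set: T] by [].
have [n Hn] := cosets_finite sV hc oV cT.
have [m Hm] : finite_set (left_cosets mul V (alpha @` V)).
  apply: (card_le_finite _ (cosets_finite sAV hc oAV cT)).
  apply: coset_inj_le => //.
  by move=> y z hy hz; apply: (subM sV) => //; apply: (subV sV).
have aT : alpha @` [set: T] = [set: T].
  by apply/seteqP; split=> // y _; exists (beta y) => //.
have T1 := transport [set: T] V ahom (can_inj abK).
rewrite aT in T1.
have T2 := tower sT sV sAV AVV (fun _ _ => I).
have E := card_eq_trans T1 (card_eq_trans T2 (card_prodI Hn Hm)).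
have /card_eq_II e := card_eq_trans (card_esym Hn) E.
have C1 : left_cosets mul [set: T] V (cos one V) by exists one.
have npos := card_pos Hn C1.
have m1 : m = 1%N.
  by apply/eqP; rewrite -(eqn_pmul2l npos) muln1 -e.
rewrite m1 in Hm.
have VAV : V `<=` alpha @` V.
  move=> v Vv.
  have e1 := card1_eq Hm (_ : left_cosets mul V (alpha @` V) (cos one (alpha @` V)))
              (_ : left_cosets mul V (alpha @` V) (cos v (alpha @` V))).
  have /(cos_eqP sAV) := e1 (ex_intro2 _ _ one (sub1 sV) erefl) (ex_intro2 _ _ v Vv erefl).
  by rewrite inv1 mul1x.
have V1 x : V x -> x = one.
  move=> Vx; apply: (coreE core).
    elim=> //= k IH; by have /img_a := VAV _ IH.
  move=> k; elim: k => [|k IH]; first exact: VaV.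
  by rewrite iterS; apply: VaV.
apply: infT.
apply: (card_le_finite _ (cosets_finite sV hc oV cT)).
apply/pcard_leP; apply/injfunPex; exists (fun x => cos x V).
- by move=> x _; exists x.
- move=> x y _ _ /(cos_eqP sV) /V1 h.
  by rewrite -(mulVK x y) h mulx1.
Qed.
End Alpha.
End Grp.

Lemma mul_cont (T : topologicalType) (mul : T -> T -> T) :
  continuous (fun p : T * T => mul p.1 p.2) -> forall c, continuous (mul c).
Proof.
move=> hm c y.
apply: (@continuous_comp _ _ _ (fun z => (c, z)) (fun p : T * T => mul p.1 p.2)).
  by apply: cvg_pair; [exact: cvg_cst | exact: cvg_id].
exact: hm.
Qed.

Unset Implicit Arguments.
Set Strict Implicit.

Theorem proposition5p5 (T : topologicalType)
    (mul : T -> T -> T) (inv : T -> T) (one : T) (alpha : T -> T) :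
  topological_group mul inv one ->
  hausdorff_space T ->
  compact [set: T] ->
  infinite_set [set: T] ->
  topgroup_automorphism mul alpha ->
  finite_depth mul inv one alpha ->
  (forall V : set T,
     is_subgroup mul inv one V -> open V ->
     tidy_core alpha V = [set one] ->
     V = setmul mul (Vplus alpha V) (Vminus alpha V) ->
     ~ (left_cosets mul (alpha @` Vplus alpha V) (Vplus alpha V) #<= [set: unit]))
  /\
  (forall V W : set T,
     is_subgroup mul inv one V -> open V ->
     tidy_core alpha V = [set one] ->
     V = setmul mul (Vplus alpha V) (Vminus alpha V) ->
     is_subgroup mul inv one W -> open W ->
     tidy_core alpha W = [set one] ->
     W = setmul mul (Vplus alpha W) (Vminus alpha W) ->
     left_cosets mul (alpha @` Vplus alpha V) (Vplus alpha V)
       #= left_cosets mul (alpha @` Vplus alpha W) (Vplus alpha W)).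
Proof.
move=> [mulA mul1x mulVx hm hinv] _ cT infT [ahom [beta abK baK] acont aopen] _.
have hc := mul_cont hm.
split.
- move=> V sV oV core hs.
  by apply: (part1 mulA mul1x mulVx ahom abK baK aopen hc cT).
- move=> V W sV oV cV hV sW oW cW hW.
  have E1 := index_inter mulA mul1x mulVx ahom abK baK acont aopen hc cT sV oV cV sW oW.
  have E2 := index_inter mulA mul1x mulVx ahom abK baK acont aopen hc cT sW oW cW sV oV.
  rewrite setIC in E2.
  exact: card_eq_trans E1 (card_esym E2).
Qed.
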